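(* Let $n\ge1$, $i,j\ge0$, and let $K$ be a finite ordered simplicial complex that is an $n$-pseudomanifold along $(\widehat{d_i},\widehat{d_j})$, with or without boundary. Let $\mathcal G$ be the subgraph of the $(n-1,\widehat{d_i},\widehat{d_j})$-graph of $K$ induced by the $n$-simplices. Then the directed flag complex of $\mathcal G$ has no simplices of dimension $\ge2$ (i.e. it has dimension at most $1$).
   Context: An ordered simplicial complex on a vertex set $V$ is a finite collection of non-empty finite tuples of pairwise distinct elements of $V$ closed under taking non-empty subsequences; $\dim(v_0,\dots,v_n)=n$. $\alpha\hookrightarrow\sigma$ means $\alpha$ is a non-empty subsequence of $\sigma$ (every simplex is a face of itself); a simplex is maximal if it is a face of no other simplex. For an $n$-simplex $\sigma=(v_0,\dots,v_n)$, $\widehat{d_i}(\sigma)$ is obtained by deleting $v_i$ if $i<n$ and deleting $v_n$ if $i\ge n$. For $\sigma,\tau$ of dimension $\ge q$, $(\sigma,\tau)$ is $q$-near along $(\widehat{d_i},\widehat{d_j})$ if $\sigma\hookrightarrow\tau$ or there is a $q$-simplex $\alpha\in K$ with $\alpha\hookrightarrow\widehat{d_i}(\sigma)$ and $\alpha\hookrightarrow\widehat{d_j}(\tau)$; $(\sigma,\tau)$ is $q$-connected along $(\widehat{d_i},\widehat{d_j})$ if there is a finite sequence from $\sigma$ to $\tau$ whose consecutive ordered pairs are $q$-near along $(\widehat{d_i},\widehat{d_j})$. The $(q,\widehat{d_i},\widehat{d_j})$-graph of $K$ is the directed graph with vertex set the simplices of dimension $\ge q$ and a directed edge $(\sigma,\tau)$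 for every ordered pair $\sigma\neq\tau$ that is $q$-near along $(\widehat{d_i},\widehat{d_j})$. $K$ is an $n$-pseudomanifold along $(\widehat{d_i},\widehat{d_j})$ if all maximal simplices are $n$-simplices, each $(n-1)$-simplex is a face of exactly two $n$-simplices, and any two $n$-simplices are $(n-1)$-connected along $(\widehat{d_i},\widehat{d_j})$; ''with boundary'' means the same with ''exactly two'' replaced by ''at most two''. The directed flag complex of a directed graph (without loops, reciprocal edges allowed) is the ordered simplicial complex whose $k$-simplices are the tuples $(x_0,\dots,x_k)$ of distinct vertices such that $(x_a,x_b)$ is an edge for all $a<b$. *)

(* Defs.v *)
From mathcomp Require Import all_boot all_order.
Set Implicit Arguments. Unset Strict Implicit. Unset Printing Implicit Defensive.

Definition sdim (T : Type) (s : seq T) : nat := (size s).-1.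

Section OrderedComplex.
Variable V : eqType.

(* A finite ordered simplicial complex is given by the finite list of its
   simplices (duplicates are irrelevant; only membership matters). *)
Definition complex := seq (seq V).


Definition face (a s : seq V) : bool := (a != [::]) && subseq a s.

Definition is_ordered_complex (K : complex) : Prop :=
  (forall s, s \in K -> (s != [::]) && uniq s) /\
  (forall s a, s \in K -> face a s -> a \in K).

Definition dhat (i : nat) (s : seq V) : seq V :=
  let k := minn i (sdim s) in take k s ++ drop k.+1 s.

Definition qnear (K : complex) (q i j : nat) (s t : seq V) : bool :=
  face s t ||
  has (fun a => (sdim a == q) && face a (dhat i s) && face a (dhat j t)) K.

Definition qconnected (K : complex) (q i j : nat) (s t : seq V) : Prop :=
  exists p : seq (seq V),
    all (fun x => (x \in K) && (q <= sdim x)) p /\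
    path (qnear K q i j) s p /\ last s p = t.

Definition maximal (K : complex) (s : seq V) : Prop :=
  s \in K /\ forall t, t \in K -> face s t -> t = s.

Definition ncofaces (K : complex) (n : nat) (r : seq V) : nat :=
  size (undup [seq t <- K | (sdim t == n) && face r t]).

Definition pseudomanifold (K : complex) (n i j : nat) : Prop :=
  (forall s, maximal K s -> sdim s = n) /\
  (forall r, r \in K -> sdim r = n.-1 -> ncofaces K n r = 2) /\
  (forall s t, s \in K -> t \in K -> sdim s = n -> sdim t = n ->
     qconnected K n.-1 i j s t).

Definition pseudomanifold_with_boundary (K : complex) (n i j : nat) : Prop :=
  (forall s, maximal K s -> sdim s = n) /\
  (forall r, r \in K -> sdim r = n.-1 -> ncofaces K n r <= 2) /\
  (forall s t, s \in K -> t \in K -> sdim s = n -> sdim t = n ->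
     qconnected K n.-1 i j s t).

(* Directed graphs on vertex type W: a vertex predicate and an edge relation
   (edge relation assumed irreflexive / restricted to vertices by construction). *)
Record dgraph (W : eqType) := DGraph { dvert : pred W; dedge : rel W }.

Definition dflag_simplex (W : eqType) (G : dgraph W) (xs : seq W) : bool :=
  (xs != [::]) && all (dvert G) xs && uniq xs && pairwise (dedge G) xs.

Definition qgraph (K : complex) (q i j : nat) : dgraph (seq V) :=
  DGraph (fun s => (s \in K) && (q <= sdim s))
         (fun s t => [&& s \in K, t \in K, q <= sdim s, q <= sdim t,
                         s != t & qnear K q i j s t]).

Definition induced (W : eqType) (G : dgraph W) (P : pred W) : dgraph W :=
  DGraph (fun x => dvert G x && P x) (fun x y => [&& P x, P y & dedge G x y]).

End OrderedComplex.

(* Main.v *)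
Require Import Defs.
From mathcomp Require Import all_boot.
From mathcomp Require Import zify.
Set Implicit Arguments. Unset Strict Implicit.

Lemma dhat_subseq (V : eqType) k (s : seq V) : subseq (dhat k s) s.
Proof.
rewrite /dhat; set m := minn _ _.
rewrite -{3}(cat_take_drop m s); apply: cat_subseq; first exact: subseq_refl.
rewrite -addn1 addnC -drop_drop; exact: drop_subseq.
Qed.

Lemma size_dhat (V : eqType) k (s : seq V) : 0 < size s ->
  size (dhat k s) = (size s).-1.
Proof.
move=> hs; rewrite /dhat /sdim size_cat size_take size_drop.
have : minn k (size s).-1 < size s by lia.
move=> h; rewrite h; lia.
Qed.

Lemma subseq_eq_size (V : eqType) (a b : seq V) :
  subseq a b -> size a = size b -> a = b.
Proof.
move=> h e; have := size_subseq_leqif h; case=> _ H.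
by apply/eqP; rewrite -H e.
Qed.

Lemma edge_dhat (V : eqType) (K : complex V) n i j (s t : seq V) :
  1 <= n -> sdim s = n -> sdim t = n -> s != t ->
  qnear K n.-1 i j s t -> dhat i s = dhat j t.
Proof.
rewrite /sdim => hn hs ht hst /orP [/andP [_ h]|/hasP [a _ /andP [/andP [ha h1] h2]]].
  by move: hst; rewrite (subseq_eq_size h) ?eqxx //; lia.
move: h1 h2; rewrite /face => /andP [a0 h1] /andP [_ h2].
have sa : size a = n.
  move: ha a0; rewrite /sdim; case: a {h1 h2} => //= x l /eqP; lia.
have ss : 0 < size s by lia.
have st : 0 < size t by lia.
rewrite -(subseq_eq_size h1); last by rewrite size_dhat //; lia.
by rewrite (subseq_eq_size h2) // size_dhat //; lia.
Qed.

Theorem proposition4 (V : eqType) (K : complex V) (n i j : nat) :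
  1 <= n ->
  is_ordered_complex K ->
  (pseudomanifold K n i j \/ pseudomanifold_with_boundary K n i j) ->
  forall xs : seq (seq V),
    dflag_simplex (induced (qgraph K n.-1 i j) (fun s => sdim s == n)) xs ->
    sdim xs < 2.
Proof.
move=> hn [_ hcl] hpm xs.
case: xs => [|x0 [|x1 [|x2 rest]]] //.
rewrite /dflag_simplex /=.
case/and3P => /and5P [/and4P [/andP[/andP[k0 _] /eqP d0] /andP[/andP[k1 _] /eqP d1]
  /andP[/andP[k2 _] /eqP d2] _] hu0 hu1 _ _]
  /and3P [/and5P [_ _ _ _ /and4P [_ _ n01 q01]] /and5P [_ _ _ _ /and4P [_ _ n02 q02]] _] _.
have r1 := edge_dhat hn d0 d1 n01 q01.
have r2 := edge_dhat hn d0 d2 n02 q02.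
set r := dhat i x0 in r1 r2.
have sx0 : 0 < size x0 by move: d0; rewrite /sdim; lia.
have sr : size r = n by rewrite /r size_dhat //; move: d0; rewrite /sdim; lia.
have rne : r != [::] by apply/eqP => e; move: sr; rewrite e /=; lia.
have fr0 : face r x0 by rewrite /face rne dhat_subseq.
have fr1 : face r x1 by rewrite /face rne r1 dhat_subseq.
have fr2 : face r x2 by rewrite /face rne r2 dhat_subseq.
have rK : r \in K := hcl _ _ k0 fr0.
have dr : sdim r = n.-1 by rewrite /sdim sr.
have le2 : ncofaces K n r <= 2.
  case: hpm => [[_ [h _]]|[_ [h _]]]; first by rewrite h.
  exact: h.
have : 3 <= ncofaces K n r.
  rewrite /ncofaces.
  have -> : 3 = size [:: x0; x1; x2] by [].
  apply: uniq_leq_size.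
    move: hu0 hu1; rewrite /= !inE !negb_or => /and3P [-> -> _] /andP [-> _] //.
  move=> y; rewrite !inE mem_undup mem_filter => /or3P [] /eqP ->.
  - by apply/andP; split => //; apply/andP; split => //; apply/eqP.
  - by apply/andP; split => //; apply/andP; split => //; apply/eqP.
  - by apply/andP; split => //; apply/andP; split => //; apply/eqP.
by move=> h; move: (leq_trans h le2); rewrite ltnn.
Qed.
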